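(* Let $\Bbbk$ be a field of characteristic $0$ and $A=\Bbbk[t]$ over $B=\Bbbk$. A double bracket on $A$ is quasi-Poisson if and only if it is of the form $$\{\!\{t,t\}\!\}=\lambda(t\otimes1-1\otimes t)+\mu(t^2\otimes1-1\otimes t^2)+\nu(t^2\otimes t-t\otimes t^2)$$ for some $\lambda,\mu,\nu\in\Bbbk$ with $4(\mu^2-\lambda\nu)=1$.
   Context: $\otimes=\otimes_\Bbbk$; Sweedler notation $d=d'\otimes d''$. A double bracket on $A$ is a $\Bbbk$-bilinear map $A\times A\to A\otimes A$ with $\{\!\{a,b\}\!\}=-\{\!\{b,a\}\!\}''\otimes\{\!\{b,a\}\!\}'$ and $\{\!\{a,bc\}\!\}=\{\!\{a,b\}\!\}c+b\{\!\{a,c\}\!\}$, where $x(d'\otimes d'')y=xd'\otimes d''y$. Its triple bracket is $\{\!\{a,b,c\}\!\}=\{\!\{a,\{\!\{b,c\}\!\}'\}\!\}\otimes\{\!\{b,c\}\!\}''+\tau\{\!\{b,\{\!\{c,a\}\!\}'\}\!\}\otimes\{\!\{c,a\}\!\}''+\tau^2\{\!\{c,\{\!\{a,b\}\!\}'\}\!\}\otimes\{\!\{a,b\}\!\}''$, with $\tau(x_1\otimes x_2\otimes x_3)=x_3\otimes x_1\otimes x_2$. It is quasi-Poisson (over $B=\Bbbk$) if $\{\!\{a,b,c\}\!\}=\frac14(ca\otimes b\otimes1-ca\otimes1\otimes b-c\otimes ab\otimes1+c\otimes a\otimes b-a\otimes b\otimes c+a\otimes1\otimes bc+1\otimes ab\otimes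 c-1\otimes a\otimes bc)$ for all $a,b,c\in A$. *)

(* Defs.v *)
From HB Require Import structures.
From mathcomp Require Import all_boot all_order all_algebra.
From mathcomp Require Import mpoly.
Set Implicit Arguments. Unset Strict Implicit. Unset Printing Implicit Defensive.
Import GRing.Theory.
Local Open Scope ring_scope.

(* A = K[t] is {poly K}.  Identification A^{(x)n} = K[x_0,...,x_{n-1}]:
   a_1 (x) ... (x) a_n  <->  a_1(x_0) * ... * a_n(x_{n-1}). *)
Section DoubleBrackets.
Variable K : fieldType.

Definition A := {poly K}.
Definition A2 := {mpoly K[2]}.
Definition A3 := {mpoly K[3]}.

Definition emb (n : nat) (i : 'I_n) (p : A) : {mpoly K[n]} :=
  (map_poly (@mpolyC n K) p).['X_i].

Definition i20 : 'I_2 := @Ordinal 2 0 isT.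
Definition i21 : 'I_2 := @Ordinal 2 1 isT.
Definition i30 : 'I_3 := @Ordinal 3 0 isT.
Definition i31 : 'I_3 := @Ordinal 3 1 isT.
Definition i32 : 'I_3 := @Ordinal 3 2 isT.

Definition tens2 (a b : A) : A2 := emb i20 a * emb i21 b.
Definition tens3 (a b c : A) : A3 := emb i30 a * emb i31 b * emb i32 c.

Definition swap2 (d : A2) : A2 := d \mPo [tuple 'X_i21; 'X_i20].
(* tau (x1 (x) x2 (x) x3) = x3 (x) x1 (x) x2 *)
Definition tau3 (d : A3) : A3 := d \mPo [tuple 'X_i31; 'X_i32; 'X_i30].
Definition incl12 (d : A2) : A3 := d \mPo [tuple 'X_i30; 'X_i31].

(* the outer bimodule structure x (d' (x) d'') y = x d' (x) d'' y *)
Definition bimod (x : A) (d : A2) (y : A) : A2 := emb i20 x * d * emb i21 y.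

Definition double_bracket (br : A -> A -> A2) : Prop :=
  [/\ (forall (k : K) a b c, br (k *: a + b) c = k *: br a c + br b c),
      (forall (k : K) a b c, br a (k *: b + c) = k *: br a b + br a c),
      (forall a b, br a b = - swap2 (br b a)) &
      (forall a b c, br a (b * c) = bimod 1 (br a b) c + bimod b (br a c) 1)].

(* the K-linear map A2 -> A3 : d' (x) d'' |-> {{a, d'}} (x) d''
   (defined on the monomial basis t^i (x) t^j) *)
Definition brL (br : A -> A -> A2) (a : A) (d : A2) : A3 :=
  \sum_(m <- msupp d)
     d@_m *: (incl12 (br a ('X ^+ (m i20))) * 'X_i32 ^+ (m i21)).

Definition triple_bracket (br : A -> A -> A2) (a b c : A) : A3 :=
  brL br a (br b c) + tau3 (brL br b (br c a)) + tau3 (tau3 (brL br c (br a b))).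

Definition quasi_Poisson (br : A -> A -> A2) : Prop :=
  forall a b c : A, triple_bracket br a b c =
    4^-1 *: (tens3 (c * a) b 1 - tens3 (c * a) 1 b - tens3 c (a * b) 1
             + tens3 c a b - tens3 a b c + tens3 a 1 (b * c)
             + tens3 1 (a * b) c - tens3 1 a (b * c)).

End DoubleBrackets.

(* Main.v *)
Require Import Defs.
From HB Require Import structures.
From mathcomp Require Import all_boot all_order all_algebra.
From mathcomp Require Import mpoly.
From mathcomp Require Import ring zify.
Import GRing.Theory.
Local Open Scope ring_scope.
Set Implicit Arguments.

Section Gen.
Variable K : fieldType.

Lemma mpoly_ext {n} {S : nzRingType} (f g : {rmorphism {mpoly K[n]} -> S}) :
  (forall c, f c%:MP = g c%:MP) -> (forall i, f 'X_i = g 'X_i) -> forall p, f p = g p.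
Proof.
move=> hC hX p; rewrite (mpolyE p) !rmorph_sum; apply: eq_bigr => m _.
rewrite -mul_mpolyC !rmorphM hC; congr (_ * _).
rewrite mpolyXE_id !rmorph_prod; apply: eq_bigr => i _; by rewrite !rmorphXn hX.
Qed.

Lemma comp2A k l (p : {mpoly K[2]}) (a b : {mpoly K[k]}) (lr : k.-tuple {mpoly K[l]}) :
  (p \mPo [tuple a; b]) \mPo lr = p \mPo [tuple a \mPo lr; b \mPo lr].
Proof.
apply: (mpoly_ext (comp_mpoly lr \o comp_mpoly [tuple a; b]) (comp_mpoly [tuple a \mPo lr; b \mPo lr])) => [c|i] /=.
  by rewrite !comp_mpolyC.
by rewrite !comp_mpolyXU; case: i => [[|[|//]] ?].
Qed.

Lemma comp3A k l (p : {mpoly K[3]}) (a b c : {mpoly K[k]}) (lr : k.-tuple {mpoly K[l]}) :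
  (p \mPo [tuple a; b; c]) \mPo lr = p \mPo [tuple a \mPo lr; b \mPo lr; c \mPo lr].
Proof.
apply: (mpoly_ext (comp_mpoly lr \o comp_mpoly [tuple a; b; c]) (comp_mpoly [tuple a \mPo lr; b \mPo lr; c \mPo lr])) => [e|i] /=.
  by rewrite !comp_mpolyC.
by rewrite !comp_mpolyXU; case: i => [[|[|[|//]]] ?].
Qed.

Lemma comp2_id (p : {mpoly K[2]}) : p \mPo [tuple 'X_i20; 'X_i21] = p.
Proof.
apply: (mpoly_ext (comp_mpoly [tuple 'X_i20; 'X_i21]) idfun) => [c|i] /=.
  by rewrite !comp_mpolyC.
rewrite !comp_mpolyXU; case: i => [[|[|//]] ?] /=; congr 'X__; exact: val_inj.
Qed.

Definition ev {k} (x : {mpoly K[k]}) (p : {poly K}) : {mpoly K[k]} :=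
  (map_poly (@mpolyC k K) p).[x].

Lemma embE n (i : 'I_n) (p : {poly K}) : emb i p = ev 'X_i p.
Proof. by []. Qed.

Lemma evM k (x : {mpoly K[k]}) p q : ev x (p * q) = ev x p * ev x q.
Proof. by rewrite /ev rmorphM hornerM. Qed.
Lemma evD k (x : {mpoly K[k]}) p q : ev x (p + q) = ev x p + ev x q.
Proof. by rewrite /ev rmorphD hornerD. Qed.
Lemma evB k (x : {mpoly K[k]}) p q : ev x (p - q) = ev x p - ev x q.
Proof. by rewrite /ev rmorphB hornerD hornerN. Qed.
Lemma evX k (x : {mpoly K[k]}) : ev x 'X = x.
Proof. by rewrite /ev map_polyX hornerX. Qed.
Lemma evC k (x : {mpoly K[k]}) c : ev x c%:P = c%:MP.
Proof. by rewrite /ev map_polyC hornerC. Qed.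
Lemma ev1 k (x : {mpoly K[k]}) : ev x 1 = 1.
Proof. by rewrite -[1]/(1%:P) evC. Qed.
Lemma ev0 k (x : {mpoly K[k]}) : ev x 0 = 0.
Proof. by rewrite /ev rmorph0 horner0. Qed.
Lemma evXn k (x : {mpoly K[k]}) n : ev x ('X ^+ n) = x ^+ n.
Proof. by rewrite /ev rmorphXn /= map_polyX hornerXn. Qed.

Lemma ev_comp n k (x : {mpoly K[n]}) (lq : n.-tuple {mpoly K[k]}) p :
  (ev x p) \mPo lq = ev (x \mPo lq) p.
Proof.
rewrite /ev -horner_map /=; congr horner; rewrite -map_poly_comp.
by apply: eq_map_poly => c /=; rewrite comp_mpolyC.
Qed.

Lemma Xsub_neq0 n (i j : 'I_n) : i != j -> 'X_i - 'X_j != 0 :> {mpoly K[n]}.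
Proof.
move=> ij; apply/eqP => h; have := congr1 (mcoeff U_(i)) h.
rewrite mcoeffB !mcoeffXU eqxx eq_sym (negbTE ij) mcoeff0 subr0 => /eqP.
by rewrite oner_eq0.
Qed.

Lemma X_neq0 n (i : 'I_n) : 'X_i != 0 :> {mpoly K[n]}.
Proof.
apply/eqP => h; have := congr1 (mcoeff U_(i)) h.
by rewrite mcoeffXU eqxx mcoeff0 => /eqP; rewrite oner_eq0.
Qed.

Lemma prod2 (R : comNzRingType) (F : 'I_2 -> R) : \prod_(i < 2) F i = F i20 * F i21.
Proof.
rewrite big_ord_recr big_ord_recr big_ord0 /= mul1r.
by congr (F _ * F _); apply: val_inj.
Qed.

Lemma comp_const2 (p : {mpoly K[2]}) (k l : K) :
  exists e : K, p \mPo [tuple (k%:MP : {mpoly K[2]}); l%:MP] = e%:MP.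
Proof.
exists (meval (fun i : 'I_2 => if val i == 0%N then k else l) p).
apply: (mpoly_ext (comp_mpoly [tuple k%:MP; l%:MP]) (@mpolyC 2 K \o meval (fun i : 'I_2 => if val i == 0%N then k else l))) => [c|i] /=.
  by rewrite comp_mpolyC mevalC.
by rewrite comp_mpolyXU mevalXU; case: i => [[|[|//]] ?].
Qed.

End Gen.
Arguments ev {K k}.


Section Br.
Variable K : fieldType.
Variable br : A K -> A K -> A2 K.
Hypothesis hbr : double_bracket br.
Local Notation X0 := ('X_i20 : {mpoly K[2]}).
Local Notation X1 := ('X_i21 : {mpoly K[2]}).
Local Notation P := (br 'X 'X).
Local Notation sw := (comp_mpoly [tuple ('X_i21 : {mpoly K[2]}); 'X_i20]).

Lemma br_add a b c : br a (b + c) = br a b + br a c.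
Proof. by case: hbr => _ H _ _; have := H 1 a b c; rewrite !scale1r. Qed.
Lemma br_0 a : br a 0 = 0.
Proof. by apply: (addrI (br a 0)); rewrite addr0 -br_add addr0. Qed.
Lemma br_scale a k b : br a (k *: b) = k *: br a b.
Proof. by case: hbr => _ H _ _; have := H k a b 0; rewrite !addr0 br_0 addr0. Qed.
Lemma emb1 n (i:'I_n) : emb i (1 : {poly K}) = 1.
Proof. by rewrite embE ev1. Qed.
Lemma bimod11 (d : A2 K) : bimod 1 d 1 = d.
Proof. by rewrite /bimod !emb1 mul1r mulr1. Qed.
Lemma br_1 a : br a 1 = 0.
Proof.
case: hbr => _ _ _ H; have := H a 1 1; rewrite mulr1 bimod11 => h.
by apply: (addrI (br a 1)); rewrite addr0 -h.
Qed.
Lemma br_C a c : br a c%:P = 0.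
Proof. by rewrite -alg_polyC br_scale br_1 scaler0. Qed.

Lemma br_left a p : (X0 - X1) * br a p = br a 'X * (emb i20 p - emb i21 p).
Proof.
elim/poly_ind: p => [|p c IH]; first by rewrite br_0 !embE !ev0 subrr !mulr0.
case: hbr => _ _ _ H.
rewrite br_add br_C addr0 H /bimod !embE !evD !evM !evX !evC !mpolyC1 mul1r mulr1.
have -> : (X0 - X1) * (br a p * X1 + ev X0 p * br a 'X)
   = ((X0 - X1) * br a p) * X1 + (X0 - X1) * ev X0 p * br a 'X by ring.
rewrite IH !embE; ring.
Qed.

Lemma swK d : sw (sw d) = d.
Proof. by rewrite comp2A !comp_mpolyXU /= comp2_id. Qed.
Lemma sw_emb0 a : sw (emb i20 a) = emb i21 a.
Proof. by rewrite !embE ev_comp comp_mpolyXU. Qed.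
Lemma sw_emb1 a : sw (emb i21 a) = emb i20 a.
Proof. by rewrite !embE ev_comp comp_mpolyXU. Qed.

Lemma swP : sw P = - P.
Proof.
case: hbr => _ _ H _; have h := H 'X 'X.
rewrite {1}h /swap2 raddfN; congr (- _); exact: swK.
Qed.

Lemma br_right a : (X0 - X1) * br a 'X = P * (emb i20 a - emb i21 a).
Proof.
case: hbr => _ _ H _; rewrite (H a 'X) /swap2.
have := congr1 sw (br_left 'X a).
rewrite !rmorphM !rmorphB /= !comp_mpolyXU /= swP sw_emb0 sw_emb1 => h2.
transitivity ((X1 - X0) * sw (br 'X a)); first ring.
rewrite h2; ring.
Qed.

Lemma br_full a b : (X0 - X1)^+2 * br a b
   = P * (emb i20 a - emb i21 a) * (emb i20 b - emb i21 b).
Proof.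
transitivity ((X0 - X1) * ((X0 - X1) * br a b)); first ring.
rewrite br_left.
transitivity (((X0 - X1) * br a 'X) * (emb i20 b - emb i21 b)); first ring.
by rewrite br_right.
Qed.

End Br.


Lemma key_abs {R : comNzRingType} {u v w t e q1 q2 f1 f2 : R} :
  u * t = e * (q1 - q2) -> v * q1 = f1 -> w * q2 = f2 ->
  u * v * w * t = e * (w * f1 - v * f2).
Proof.
move=> h1 h2 h3; rewrite -h2 -h3.
transitivity (v * w * (u * t)); first ring.
rewrite h1; ring.
Qed.

Section Tri.
Variable K : fieldType.
Variable br : A K -> A K -> A2 K.
Hypothesis hbr : double_bracket br.
Local Notation X0 := ('X_i20 : {mpoly K[2]}).
Local Notation X1 := ('X_i21 : {mpoly K[2]}).
Local Notation Y0 := ('X_i30 : {mpoly K[3]}).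
Local Notation Y1 := ('X_i31 : {mpoly K[3]}).
Local Notation Y2 := ('X_i32 : {mpoly K[3]}).
Local Notation P := (br 'X 'X).

Definition Pc (x y : {mpoly K[3]}) := P \mPo [tuple x; y].
Definition Fx (a b c : A K) (x0 x1 x2 : {mpoly K[3]}) :=
  Pc x0 x1 * (ev x0 a - ev x1 a) *
  ((x1 - x2)^+2 * Pc x0 x2 * (ev x0 b - ev x2 b) * (ev x0 c - ev x2 c)
   - (x0 - x2)^+2 * Pc x1 x2 * (ev x1 b - ev x2 b) * (ev x1 c - ev x2 c)).
Definition Dx (x0 x1 x2 : {mpoly K[3]}) := (x0 - x1)^+2 * (x0 - x2)^+2 * (x1 - x2)^+2.

Lemma incl_br a p : (Y0 - Y1) * incl12 (br a p) = incl12 (br a 'X) * (ev Y0 p - ev Y1 p).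
Proof.
have := congr1 (@incl12 K) (br_left hbr a p).
by rewrite /incl12 !rmorphM !rmorphB /= !comp_mpolyXU /= !embE !ev_comp !comp_mpolyXU.
Qed.

Lemma incl_brX a : (Y0 - Y1) * incl12 (br a 'X) = Pc Y0 Y1 * (ev Y0 a - ev Y1 a).
Proof.
have := congr1 (@incl12 K) (br_right hbr a).
by rewrite /incl12 !rmorphM !rmorphB /= !comp_mpolyXU /= !embE !ev_comp !comp_mpolyXU.
Qed.

Lemma brL_eq a d : (Y0 - Y1) * brL br a d
  = incl12 (br a 'X) * ((d \mPo [tuple Y0; Y2]) - (d \mPo [tuple Y1; Y2])).
Proof.
rewrite /brL !comp_mpolyE -sumrB !mulr_sumr; apply: eq_bigr => m _.
rewrite !prod2 /= -scalerBr -!scalerAr; congr (_ *: _).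
rewrite mulrA incl_br !evXn; ring.
Qed.

Lemma Q_comp b c (x y : {mpoly K[3]}) : (x - y)^+2 * (br b c \mPo [tuple x; y])
  = Pc x y * (ev x b - ev y b) * (ev x c - ev y c).
Proof.
have := congr1 (comp_mpoly [tuple x; y]) (br_full hbr b c).
rewrite !rmorphM !rmorphB /= !comp_mpolyXU /= !embE !ev_comp !comp_mpolyXU /= => h.
rewrite /Pc -h; ring.
Qed.

Lemma term_eq a b c : Dx Y0 Y1 Y2 * brL br a (br b c) = Fx a b c Y0 Y1 Y2.
Proof.
have h1 : (Y0 - Y1)^+2 * brL br a (br b c) = (Pc Y0 Y1 * (ev Y0 a - ev Y1 a)) *
   (((br b c) \mPo [tuple Y0; Y2]) - ((br b c) \mPo [tuple Y1; Y2])).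
  transitivity ((Y0 - Y1) * ((Y0 - Y1) * brL br a (br b c))); first ring.
  by rewrite brL_eq mulrA incl_brX.
by rewrite /Dx /Fx (key_abs h1 (Q_comp b c Y0 Y2) (Q_comp b c Y1 Y2)); ring.
Qed.

Lemma Fx_comp a b c x0 x1 x2 (lq : 3.-tuple {mpoly K[3]}) :
  (Fx a b c x0 x1 x2) \mPo lq = Fx a b c (x0 \mPo lq) (x1 \mPo lq) (x2 \mPo lq).
Proof. by rewrite /Fx /Pc !(rmorphM, rmorphB) /= !comp2A !ev_comp !expr2. Qed.

Lemma Dtau d : Dx Y0 Y1 Y2 * tau3 d = tau3 (Dx Y0 Y1 Y2 * d).
Proof.
rewrite /tau3 rmorphM /=; congr (_ * _).
rewrite /Dx !(rmorphM, rmorphB) /= !comp_mpolyXU /=; ring.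
Qed.

Lemma T_eq a b c : Dx Y0 Y1 Y2 * triple_bracket br a b c
  = Fx a b c Y0 Y1 Y2 + Fx b c a Y1 Y2 Y0 + Fx c a b Y2 Y0 Y1.
Proof.
rewrite /triple_bracket !mulrDr !Dtau !term_eq /tau3.
rewrite (Fx_comp b c a).
by rewrite !Fx_comp !comp_mpolyXU.
Qed.

Lemma Pc_swap x y : Pc y x = - Pc x y.
Proof.
have := congr1 (comp_mpoly [tuple x; y]) (swP hbr).
by rewrite comp2A !comp_mpolyXU /= raddfN.
Qed.

End Tri.


Lemma sz3 (R : nzRingType) (p q r : {poly R}) :
  (size p <= 2)%N -> (size q <= 1)%N -> (size (p * q * r)%R <= (size r).+1)%N.
Proof.
move=> hp hq; have h1 := size_mul_leq (p * q) r; have h2 := size_mul_leq p q; lia.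
Qed.

Lemma sz4 (R : nzRingType) (p q r s : {poly R}) :
  (size p <= 1)%N -> (size q <= 1)%N -> (size r <= 2)%N -> (size s <= 2)%N ->
  (size (p * (q * r * s))%R <= 3)%N.
Proof.
move=> hp hq hr hs; have h1 := size_mul_leq p (q * r * s).
have h2 := size_mul_leq (q * r) s; have h3 := size_mul_leq q r; lia.
Qed.

Lemma size_sub_le (R : nzRingType) (p q : {poly R}) : (size (p - q)%R <= maxn (size p) (size q))%N.
Proof. by rewrite -(size_polyN q); apply: size_add. Qed.

Lemma final_aux (R : nzRingType) (Z C A B U : {poly R}) :
  Z = C - A - B -> (size C <= 3)%N -> (size A <= (size U).+1)%N ->
  (size B <= (size U).+1)%N -> size Z = (size U + size U).-1 -> (2 < size U)%N -> False.
Proof.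
move=> -> hC hA hB hZ hU.
have h1 := size_sub_le (C - A) B; have h2 := size_sub_le C A; lia.
Qed.

Lemma size_polyCB (K : fieldType) (a b : {mpoly K[2]}) : (size (a%:P - b%:P)%R <= 1)%N.
Proof. by rewrite -polyCB size_polyC_leq1. Qed.

Section SF.
Variable K : fieldType.
Local Notation X0 := ('X_i20 : {mpoly K[2]}).
Local Notation X1 := ('X_i21 : {mpoly K[2]}).
Local Notation Y0 := ('X_i30 : {mpoly K[3]}).
Local Notation Y1 := ('X_i31 : {mpoly K[3]}).
Local Notation Y2 := ('X_i32 : {mpoly K[3]}).
Local Notation sw := (comp_mpoly [tuple ('X_i21 : {mpoly K[2]}); 'X_i20]).

Lemma muniXw (i : 'I_3) (j : 'I_2) : val i = val j -> muni ('X_i : {mpoly K[3]}) = ('X_j)%:P.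
Proof. move=> h. rewrite /muni mmapX mmap1U /=.
case: splitP => [k /= hk|k /= hk].
  by congr ('X__)%:P; apply/val_inj; rewrite /= -hk h.
change (nat_of_ord i = nat_of_ord j) in h.
by move: (ltn_ord j); rewrite -h hk ltnNge leq_addr.
Qed.
Lemma muniY2 : muni Y2 = 'X.
Proof. rewrite /muni mmapX mmap1U /=.
case: splitP => [k /= hk|k /= hk] //.
by have := ltn_ord k; rewrite -hk.
Qed.
Lemma muniY0 : muni Y0 = X0%:P. Proof. exact: muniXw. Qed.
Lemma muniY1 : muni Y1 = X1%:P. Proof. exact: muniXw. Qed.

Lemma size_lin (a : {mpoly K[2]}) : (size (a%:P - 'X)%R <= 2)%N.
Proof.
by rewrite -(opprB 'X a%:P) size_opp size_XsubC.
Qed.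
Lemma size_lin' (a : {mpoly K[2]}) : (size ('X - a%:P)%R <= 2)%N.
Proof. by rewrite size_XsubC. Qed.

Lemma swK2 d : sw (sw d) = d.
Proof. by rewrite comp2A !comp_mpolyXU /= comp2_id. Qed.

Lemma S_form (S : {mpoly K[2]}) (c : {mpoly K[2]}) :
  sw S = S ->
  (Y1 - Y2) * (S \mPo [tuple Y0; Y1]) * (S \mPo [tuple Y0; Y2])
  + (Y2 - Y0) * (S \mPo [tuple Y0; Y1]) * (S \mPo [tuple Y1; Y2])
  + (Y0 - Y1) * (S \mPo [tuple Y1; Y2]) * (S \mPo [tuple Y0; Y2])
  = (c \mPo [tuple Y0; Y1]) * ((Y0 - Y1) * (Y1 - Y2) * (Y0 - Y2)) ->
  exists lam mu nu : K, S = lam%:MP + mu%:MP * (X0 + X1) + nu%:MP * (X0 * X1).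
Proof.
move=> hsym hG.
set U0 := muni (S \mPo [tuple Y0; Y2]).
have mS01 : forall T : {mpoly K[2]}, muni (T \mPo [tuple Y0; Y1]) = T%:P.
  move=> T; have E := mpoly_ext (@muni 2 K \o comp_mpoly [tuple Y0; Y1]) (@polyC _).
  apply: E => [e|i] /=.
    by rewrite comp_mpolyC muniC.
  rewrite comp_mpolyXU; case: i => [[|[|//]] ?] /=.
    by rewrite muniY0; congr ('X__)%:P; apply: val_inj.
  by rewrite muniY1; congr ('X__)%:P; apply: val_inj.
have mS12 : muni (S \mPo [tuple Y1; Y2]) = map_poly sw U0.
  apply: (mpoly_ext (@muni 2 K \o comp_mpoly [tuple Y1; Y2])
     (map_poly sw \o (@muni 2 K \o comp_mpoly [tuple Y0; Y2]))) => [e|i] /=.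
    by rewrite !comp_mpolyC muniC map_polyC /= comp_mpolyC.
  rewrite !comp_mpolyXU; case: i => [[|[|//]] ?] /=.
    by rewrite muniY0 muniY1 map_polyC /= comp_mpolyXU.
  by rewrite muniY2 map_polyX.
have := congr1 (@muni 2 K) hG.
rewrite !(rmorphM, rmorphB, rmorphD) /= !mS01 mS12 -/U0 muniY0 muniY1 muniY2 => hU.
set U1 := map_poly sw U0 in hU.
have hsz1 : size U1 = size U0 := size_map_inj_poly (can_inj swK2) (raddf0 _) U0.
have hX01 : X0 - X1 != 0 by apply: Xsub_neq0.
have hd : (size U0 <= 2)%N.
  rewrite leqNgt; apply/negP => hd.
  have U0nz : U0 != 0 by apply: contraTneq hd => ->; rewrite size_poly0.
  have U1nz : U1 != 0 by rewrite -size_poly_eq0 hsz1 size_poly_eq0.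
  have hZ : (X0 - X1)%:P * (U1 * U0) = c%:P * (((X0%:P - X1%:P) * (X1%:P - 'X)) * (X0%:P - 'X))
     - (X1%:P - 'X) * S%:P * U0 - ('X - X0%:P) * S%:P * U1.
    by rewrite -hU polyCB; ring.
  have sL : size ((X0 - X1)%:P * (U1 * U0)) = (size U0 + size U0).-1.
    by rewrite size_Cmul // size_mul // hsz1.
  have f1 := sz4 c%:P (X0%:P - X1%:P) (X1%:P - 'X) (X0%:P - 'X)
     (size_polyC_leq1 c) (size_polyCB X0 X1) (size_lin X1) (size_lin X0).
  have f2 := sz3 (X1%:P - 'X) S%:P U0 (size_lin X1) (size_polyC_leq1 S).
  have f3 := sz3 ('X - X0%:P) S%:P U1 (size_lin' X0) (size_polyC_leq1 S).
  rewrite hsz1 in f3.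
  exact: (@final_aux _ _ _ _ _ U0 hZ f1 f2 f3 sL hd).
pose rho := comp_mpoly [tuple X0; (0 : {mpoly K[2]})].
have hS : S = (map_poly rho U0).[X1].
  suff: idfun S = (horner_eval X1 \o map_poly rho \o (@muni 2 K \o comp_mpoly [tuple Y0; Y2])) S by [].
  apply: (mpoly_ext (@idfun {mpoly K[2]})
     (horner_eval X1 \o map_poly rho \o (@muni 2 K \o comp_mpoly [tuple Y0; Y2]))) => [e|i] /=.
    rewrite comp_mpolyC muniC map_polyC horner_evalE hornerC /rho; symmetry; exact: comp_mpolyC.
  rewrite comp_mpolyXU horner_evalE; case: i => [[|[|//]] ?] /=.
    rewrite muniY0 map_polyC hornerC /rho /= comp_mpolyXU /=; congr 'X__; exact: val_inj.
  rewrite muniY2 map_polyX hornerX; congr 'X__; exact: val_inj.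
have hd2 : (size (map_poly rho U0) <= 2)%N by apply: leq_trans (size_poly _ _) hd.
set q0 := U0`_0; set q1 := U0`_1.
have hS' : S = rho q0 + rho q1 * X1.
  rewrite {1}hS (horner_coef_wide _ hd2) big_ord_recr big_ord_recr big_ord0 /= add0r.
  by rewrite expr0 expr1 mulr1 !coef_map.
rewrite /rho in hS'.
have inv : forall q t u : {mpoly K[2]},
    (q \mPo [tuple X0; 0]) \mPo [tuple t; u] = q \mPo [tuple t; 0].
  by move=> q t u; rewrite comp2A !comp_mpolyXU /= comp_mpoly0.
have e_at : forall t u : {mpoly K[2]}, S \mPo [tuple t; u]
    = q0 \mPo [tuple t; 0] + (q1 \mPo [tuple t; 0]) * u.
  by move=> t u; rewrite {1}hS' rmorphD rmorphM /= !inv comp_mpolyXU.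
have sym : forall t u : {mpoly K[2]}, S \mPo [tuple t; u] = S \mPo [tuple u; t].
  by move=> t u; rewrite -{1}hsym comp2A !comp_mpolyXU.
have [k0 hk0] := comp_const2 q0 0 0; have [k1 hk1] := comp_const2 q1 0 0.
have [l0 hl0] := comp_const2 q0 1 0; have [l1 hl1] := comp_const2 q1 1 0.
rewrite mpolyC0 in hk0 hk1; rewrite mpolyC1 mpolyC0 in hl0 hl1.
have ha : q0 \mPo [tuple X0; 0] = k0%:MP + k1%:MP * X0.
  have := e_at X0 0; rewrite mulr0 addr0 => <-.
  by rewrite sym e_at hk0 hk1.
have hb : q1 \mPo [tuple X0; 0] = l0%:MP + l1%:MP * X0 - (k0%:MP + k1%:MP * X0).
  have := e_at X0 1; rewrite mulr1 sym e_at hl0 hl1 ha => ->; ring.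
have hS2 : S = k0%:MP + k1%:MP * X0 + (l0%:MP + l1%:MP * X0 - (k0%:MP + k1%:MP * X0)) * X1.
  by rewrite {1}hS' ha hb.
have e2 : forall t u : {mpoly K[2]}, S \mPo [tuple t; u]
   = k0%:MP + k1%:MP * t + (l0%:MP + l1%:MP * t - (k0%:MP + k1%:MP * t)) * u.
  by move=> t u; rewrite {1}hS2 !(rmorphD, rmorphM, rmorphB, rmorphN) /= !comp_mpolyC !comp_mpolyXU.
have h2 : S \mPo [tuple 0; X0] = k0%:MP + k1%:MP * X0 by rewrite sym e_at mulr0 addr0 ha.
have h3 := e2 0 X0; rewrite h2 in h3.
have : (l0%:MP - k0%:MP - k1%:MP) * X0 = 0 :> {mpoly K[2]}.
  have h4 : (l0%:MP - k0%:MP - k1%:MP) * X0 = (k0%:MP + k1%:MP * 0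
     + (l0%:MP + l1%:MP * 0 - (k0%:MP + k1%:MP * 0)) * X0) - (k0%:MP + k1%:MP * X0)
     :> {mpoly K[2]} by ring.
  by rewrite h4 -h3 subrr.
rewrite -!rmorphB /=.
move/eqP; rewrite mulf_eq0 (negbTE (X_neq0 _ _)) orbF mpolyC_eq0 subr_eq0 subr_eq => /eqP hl.
exists k0, k1, (l1 - k1).
rewrite hS2 hl rmorphB rmorphD /=; ring.
Qed.
End SF.


Section Main.
Variable K : fieldType.
Local Notation X0 := ('X_i20 : {mpoly K[2]}).
Local Notation X1 := ('X_i21 : {mpoly K[2]}).
Local Notation Y0 := ('X_i30 : {mpoly K[3]}).
Local Notation Y1 := ('X_i31 : {mpoly K[3]}).
Local Notation Y2 := ('X_i32 : {mpoly K[3]}).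

Lemma Dnz : Dx Y0 Y1 Y2 != 0.
Proof. by rewrite /Dx !mulf_neq0 ?expf_neq0 ?Xsub_neq0. Qed.

Definition Vx (a b c : A K) : {mpoly K[3]} :=
  (ev Y0 a - ev Y1 a) * (ev Y1 b - ev Y2 b) * (ev Y0 c - ev Y2 c).

Lemma qP_iff (br : A K -> A K -> A2 K) : quasi_Poisson br <->
  forall a b c, Dx Y0 Y1 Y2 * triple_bracket br a b c
     = Dx Y0 Y1 Y2 * ((4^-1)%:MP * Vx a b c).
Proof.
split => h a b c.
  rewrite h; congr (_ * _).
  rewrite /tens3 /Vx !embE !evM !ev1 -mul_mpolyC; ring.
apply: (mulfI Dnz); rewrite h; congr (_ * _).
rewrite /tens3 /Vx !embE !evM !ev1 -mul_mpolyC; ring.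
Qed.

Lemma div_X01 (p : {mpoly K[2]}) : exists q, p - (p \mPo [tuple X1; X1]) = (X0 - X1) * q.
Proof.
exists (\sum_(m <- msupp p) p@_m *:
   ((\sum_(i < m i20) X0 ^+ ((m i20).-1 - i) * X1 ^+ i) * X1 ^+ m i21)).
rewrite {1}(mpolyE p) comp_mpolyE -sumrB mulr_sumr; apply: eq_bigr => m _.
rewrite mpolyXE_id !prod2 /= -scalerBr -scalerAr; congr (_ *: _).
by rewrite -mulrBl subrXX mulrA.
Qed.

End Main.


Section Abs.
Variable R : comNzRingType.
Definition Fa (pc : R -> R -> R) (ea eb ec : R -> R) (x0 x1 x2 : R) :=
  pc x0 x1 * (ea x0 - ea x1) *
  ((x1 - x2)^+2 * pc x0 x2 * (eb x0 - eb x2) * (ec x0 - ec x2)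
   - (x0 - x2)^+2 * pc x1 x2 * (eb x1 - eb x2) * (ec x1 - ec x2)).
Definition Da (x0 x1 x2 : R) := (x0 - x1)^+2 * (x0 - x2)^+2 * (x1 - x2)^+2.

Lemma ident_back (pc : R -> R -> R) (ea eb ec : R -> R) (l m n x0 x1 x2 : R) :
  (forall x y, pc x y = l * (x - y) + m * (x^+2 - y^+2) + n * (x^+2 * y - x * y^+2)) ->
  Fa pc ea eb ec x0 x1 x2 + Fa pc eb ec ea x1 x2 x0 + Fa pc ec ea eb x2 x0 x1
  = Da x0 x1 x2 * ((m ^+ 2 - l * n) *
      ((ea x0 - ea x1) * (eb x1 - eb x2) * (ec x0 - ec x2))).
Proof. move=> hpc; rewrite /Fa /Da !hpc; ring. Qed.

Lemma ident_fwd (pc s : R -> R -> R) (x0 x1 x2 : R) :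
  (forall x y, pc x y = (x - y) * s x y) -> (forall x y, s y x = s x y) ->
  Fa pc id id id x0 x1 x2 + Fa pc id id id x1 x2 x0 + Fa pc id id id x2 x0 x1
  = Da x0 x1 x2 * ((x1 - x2) * s x0 x1 * s x0 x2 + (x2 - x0) * s x0 x1 * s x1 x2
                   + (x0 - x1) * s x1 x2 * s x0 x2).
Proof.
move=> hpc hs; rewrite /Fa /Da !hpc /= (hs x1 x0) (hs x2 x0) (hs x2 x1); ring.
Qed.

Lemma ident_G (s : R -> R -> R) (l m n x0 x1 x2 : R) :
  (forall x y, s x y = l + m * (x + y) + n * (x * y)) ->
  (x1 - x2) * s x0 x1 * s x0 x2 + (x2 - x0) * s x0 x1 * s x1 x2
  + (x0 - x1) * s x1 x2 * s x0 x2
  = (m ^+ 2 - l * n) * ((x0 - x1) * (x1 - x2) * (x0 - x2)).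
Proof. move=> hs; rewrite !hs; ring. Qed.
End Abs.

Section Dir.
Variable K : fieldType.
Hypothesis charK : [pchar K] =i pred0.
Variable br : A K -> A K -> A2 K.
Hypothesis hbr : double_bracket br.
Local Notation X0 := ('X_i20 : {mpoly K[2]}).
Local Notation X1 := ('X_i21 : {mpoly K[2]}).
Local Notation Y0 := ('X_i30 : {mpoly K[3]}).
Local Notation Y1 := ('X_i31 : {mpoly K[3]}).
Local Notation Y2 := ('X_i32 : {mpoly K[3]}).
Local Notation P := (br 'X 'X).

Lemma natK_neq0 n : (n%:R : K) != 0 = (n != 0)%N.
Proof. by rewrite ((pcharf0P K).1 charK n). Qed.

Lemma backward (lam mu nu : K) :
  br 'X 'X = lam *: (tens2 'X 1 - tens2 1 'X)
               + mu *: (tens2 ('X ^+ 2) 1 - tens2 1 ('X ^+ 2))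
               + nu *: (tens2 ('X ^+ 2) 'X - tens2 'X ('X ^+ 2)) ->
  4%:R * (mu ^+ 2 - lam * nu) = 1 -> quasi_Poisson br.
Proof.
move=> hP h4; apply/qP_iff => a b c.
have hPc : forall x y, Pc br x y = lam%:MP * (x - y) + mu%:MP * (x^+2 - y^+2)
                                + nu%:MP * (x^+2 * y - x * y^+2).
  move=> x y; rewrite /Pc hP /tens2 !(rmorphD, rmorphB, rmorphM, linearZ) /=.
  rewrite !comp_mpolyZ !(rmorphB, rmorphM) /=.
  rewrite !embE !ev_comp !comp_mpolyXU /= !evX !ev1 !evXn -!mul_mpolyC; ring.
have h4' : (4^-1 : K) = mu^+2 - lam * nu.
  have n4 : (4%:R : K) != 0 by rewrite natK_neq0.
  by apply: (mulfI n4); rewrite mulfV // h4.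
have hc : ((mu^+2 - lam * nu)%:MP : {mpoly K[3]}) = mu%:MP ^+ 2 - lam%:MP * nu%:MP.
  by rewrite rmorphB rmorphXn rmorphM.
rewrite (T_eq hbr) /Vx h4' hc.
exact: (@ident_back _ (Pc br) (fun x => ev x a) (fun x => ev x b) (fun x => ev x c) lam%:MP mu%:MP nu%:MP Y0 Y1 Y2 hPc).
Qed.

Lemma forward : quasi_Poisson br ->
  exists lam mu nu : K,
    br 'X 'X = lam *: (tens2 'X 1 - tens2 1 'X)
               + mu *: (tens2 ('X ^+ 2) 1 - tens2 1 ('X ^+ 2))
               + nu *: (tens2 ('X ^+ 2) 'X - tens2 'X ('X ^+ 2))
    /\ 4%:R * (mu ^+ 2 - lam * nu) = 1.
Proof.
move=> /qP_iff h; have hX := h 'X 'X 'X.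
rewrite (T_eq hbr) /Fx /Vx !evX in hX.
have n2 : (2%:R : K) != 0 by rewrite natK_neq0.
have hz : P \mPo [tuple X1; X1] = 0.
  have := congr1 (comp_mpoly [tuple X1; X1]) (swP hbr).
  rewrite comp2A !comp_mpolyXU /= raddfN => hh.
  have : (2%:R : K) *: (P \mPo [tuple X1; X1]) = 0.
    by rewrite scaler_nat mulr2n {1}hh addNr.
  by move/eqP; rewrite scaler_eq0 (negbTE n2) /= => /eqP.
have [S hS] := div_X01 P; rewrite hz subr0 in hS.
have hX10 : (X1 - X0 : {mpoly K[2]}) != 0 by apply: Xsub_neq0.
have hsym : S \mPo [tuple X1; X0] = S.
  have := swP hbr; rewrite hS rmorphM rmorphB /= !comp_mpolyXU /= => hh.
  by apply: (mulfI hX10); rewrite hh -mulNr opprB.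
have hPc : forall x y, Pc br x y = (x - y) * (S \mPo [tuple x; y]).
  by move=> x y; rewrite /Pc hS rmorphM rmorphB /= !comp_mpolyXU.
have hSs : forall x y : {mpoly K[3]}, S \mPo [tuple y; x] = S \mPo [tuple x; y].
  by move=> x y; rewrite -{2}hsym comp2A !comp_mpolyXU.
have hG : (Y1 - Y2) * (S \mPo [tuple Y0; Y1]) * (S \mPo [tuple Y0; Y2])
  + (Y2 - Y0) * (S \mPo [tuple Y0; Y1]) * (S \mPo [tuple Y1; Y2])
  + (Y0 - Y1) * (S \mPo [tuple Y1; Y2]) * (S \mPo [tuple Y0; Y2])
  = (((4^-1)%:MP : {mpoly K[2]}) \mPo [tuple Y0; Y1]) * ((Y0 - Y1) * (Y1 - Y2) * (Y0 - Y2)).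
  rewrite comp_mpolyC; apply: (mulfI (@Dnz K)).
  rewrite -(@ident_fwd _ (Pc br) (fun x y => S \mPo [tuple x; y]) Y0 Y1 Y2 hPc hSs).
  exact: hX.
have [lam [mu [nu hSf]]] := S_form hsym hG.
have hSx : forall x y : {mpoly K[3]}, S \mPo [tuple x; y]
    = lam%:MP + mu%:MP * (x + y) + nu%:MP * (x * y).
  by move=> x y; rewrite hSf !(rmorphD, rmorphM) /= !comp_mpolyC !comp_mpolyXU.
have e := @ident_G _ (fun x y => S \mPo [tuple x; y]) lam%:MP mu%:MP nu%:MP Y0 Y1 Y2 hSx.
simpl in e; rewrite e comp_mpolyC in hG.
have hV : (Y0 - Y1) * (Y1 - Y2) * (Y0 - Y2) != 0 by rewrite !mulf_neq0 ?Xsub_neq0.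
have := mulIf hV hG; rewrite -rmorphXn -rmorphM -rmorphB => /eqP.
rewrite mpolyC_eq => /eqP e4.
exists lam, mu, nu; split; last by rewrite e4 mulfV // natK_neq0.
rewrite hS hSf /tens2 !embE !evX !ev1 !evXn -!mul_mpolyC; ring.
Qed.

End Dir.


Unset Implicit Arguments.

Theorem proposition4p1 (K : fieldType) (charK : [pchar K] =i pred0)
    (br : A K -> A K -> A2 K) (hbr : double_bracket br) :
  quasi_Poisson br <->
  exists lam mu nu : K,
    br 'X 'X = lam *: (tens2 'X 1 - tens2 1 'X)
               + mu *: (tens2 ('X ^+ 2) 1 - tens2 1 ('X ^+ 2))
               + nu *: (tens2 ('X ^+ 2) 'X - tens2 'X ('X ^+ 2))
    /\ 4%:R * (mu ^+ 2 - lam * nu) = 1.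
Proof.
split; first exact: (forward charK hbr).
by case=> lam [mu [nu [hP h4]]]; exact: (backward charK hbr hP h4).
Qed.
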